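(* Let $(a_i)_{i\ge0},(b_i)_{i\ge0},(c_i)_{i\ge0},(d_i)_{i\ge0}$ be integer sequences with all $b_i\neq0$, $d_i\ne 0$, and consider the bifurcating continued fraction with partial quotients $\alpha_i=a_i/b_i$ and $\beta_i=c_i/d_i$. Define rational numbers $A_n,B_n,C_n$ (together with $A_{n-1},A_{n-2}$, etc.) for $n\ge0$ by $$\begin{pmatrix}\alpha_0&1&0\\ \beta_0&0&1\\1&0&0\end{pmatrix}\cdots\begin{pmatrix}\alpha_n&1&0\\ \beta_n&0&1\\1&0&0\end{pmatrix}=\begin{pmatrix}A_n&A_{n-1}&A_{n-2}\\ B_n&B_{n-1}&B_{n-2}\\ C_n&C_{n-1}&C_{n-2}\end{pmatrix},$$ so that the $n$th convergent is $(A_n/C_n,B_n/C_n)$. Define $s_{-1}=1/d_0$, $s_0=a_0$, $s_1=a_0a_1d_1+b_0b_1c_1$ and, for $n\ge2$, $$s_n=a_nd_ns_{n-1}+b_nb_{n-1}c_nd_{n-1}s_{n-2}+b_nb_{n-1}b_{n-2}d_nd_{n-1}d_{n-2}s_{n-3},$$ and define $t_0=b_0$, $t_n=b_0\prod_{i=1}^n b_id_i$ for $n\ge1$. Then $A_n=s_n/t_n$ for every $n\ge0$.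
   Context: Equivalently, $A_{-2}=0$, $A_{-1}=1$, $A_0=\alpha_0$, and $A_n=\alpha_nA_{n-1}+\beta_nA_{n-2}+A_{n-3}$ for $n\ge1$ (with analogous recurrences for $B_n$, $C_n$). *)

(* Defs.v *)
From HB Require Import structures.
From mathcomp Require Import all_boot all_order all_algebra.
Set Implicit Arguments. Unset Strict Implicit. Unset Printing Implicit Defensive.
Import Order.TTheory GRing.Theory Num.Theory.
Local Open Scope ring_scope.

Definition alpha (a b : nat -> int) (i : nat) : rat := (a i)%:~R / (b i)%:~R.
Definition beta (c d : nat -> int) (i : nat) : rat := (c i)%:~R / (d i)%:~R.

Definition bifMat (a b c d : nat -> int) (i : nat) : 'M[rat]_3 :=
  \matrix_(r < 3, k < 3)
    (if (val r == 0%N) && (val k == 0%N) then alpha a b i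
     else if (val r == 0%N) && (val k == 1%N) then 1
     else if (val r == 1%N) && (val k == 0%N) then beta c d i
     else if (val r == 1%N) && (val k == 2%N) then 1
     else if (val r == 2%N) && (val k == 0%N) then 1
     else 0).

Definition bifProd (a b c d : nat -> int) (n : nat) : 'M[rat]_3 :=
  \prod_(i < n.+1) bifMat a b c d i.

Definition An (a b c d : nat -> int) (n : nat) : rat :=
  bifProd a b c d n ord0 ord0.

(* sTriple k = (s_{k+1}, s_k, s_{k-1}) *)
Fixpoint sTriple (a b c d : nat -> int) (k : nat) : rat * rat * rat :=
  match k with
  | 0%N => (((a 0%N * a 1%N * d 1%N + b 0%N * b 1%N * c 1%N)%R)%:~R,
            (a 0%N)%:~R, 1 / (d 0%N)%:~R)
  | k'.+1 =>
      let '(s1, s2, s3) := sTriple a b c d k' in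
      let m := k'.+2 in
      ((a m * d m)%:~R * s1
       + (b m * b m.-1 * c m * d m.-1)%:~R * s2
       + (b m * b m.-1 * b m.-2 * d m * d m.-1 * d m.-2)%:~R * s3,
       s1, s2)
  end.

Definition s_seq (a b c d : nat -> int) (n : nat) : rat :=
  match n with
  | 0%N => (a 0%N)%:~R
  | k.+1 => (sTriple a b c d k).1.1
  end.

Definition t_seq (b d : nat -> int) (n : nat) : rat :=
  match n with
  | 0%N => (b 0%N)%:~R
  | _ => (b 0%N)%:~R * \prod_(1 <= i < n.+1) ((b i)%:~R * (d i)%:~R)
  end.

(* Main.v *)
Require Import Defs.
From HB Require Import structures.
From mathcomp Require Import all_boot all_order all_algebra.
From mathcomp Require Import ring.
Import Order.TTheory GRing.Theory Num.Theory.
Local Open Scope ring_scope.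

Section S.
Variables (a b c d : nat -> int).
Let o0 : 'I_3 := @Ordinal 3 0 isT.
Let o1 : 'I_3 := @Ordinal 3 1 isT.
Let o2 : 'I_3 := @Ordinal 3 2 isT.

Lemma prodS n : bifProd a b c d n.+1 = bifProd a b c d n * bifMat a b c d n.+1.
Proof. by rewrite /bifProd big_ord_recr. Qed.

Lemma P0 : [/\ bifProd a b c d 0 o0 o0 = alpha a b 0,
  bifProd a b c d 0 o0 o1 = 1 & bifProd a b c d 0 o0 o2 = 0].
Proof. by rewrite /bifProd big_ord1 !mxE. Qed.

Lemma PS n : let P := bifProd a b c d n in let Q := bifProd a b c d n.+1 in
  [/\ Q o0 o0 = alpha a b n.+1 * P o0 o0 + beta c d n.+1 * P o0 o1 + P o0 o2,
      Q o0 o1 = P o0 o0 & Q o0 o2 = P o0 o1].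
Proof.
have E0 : widen_ord (leqnSn 2) (widen_ord (leqnSn 1) (@ord_max 0)) = o0 by apply: val_inj.
have E1 : widen_ord (leqnSn 2) (@ord_max 1) = o1 by apply: val_inj.
have E2 : (@ord_max 2) = o2 by apply: val_inj.
rewrite /= prodS !mxE !big_ord_recr !big_ord0 /= !mxE /= E0 E1 E2.
by split; rewrite ?add0r; ring.
Qed.

Hypothesis hb : forall i : nat, b i != 0.
Hypothesis hd : forall i : nat, d i != 0.

Definition tt (j : nat) : rat := if j is j'.+1 then t_seq b d j' else 1 / (d 0%N)%:~R.

Lemma bR i : (b i)%:~R != 0 :> rat. Proof. by rewrite intr_eq0. Qed.
Lemma dR i : (d i)%:~R != 0 :> rat. Proof. by rewrite intr_eq0. Qed.

Lemma ttS m : tt m.+1 = (b m)%:~R * (d m)%:~R * tt m.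
Proof.
case: m => [|m] /=.
  rewrite /t_seq; field; exact: dR.
case: m => [|m] /=; first by rewrite big_nat1 mulrC.
by rewrite big_nat_recr //= [RHS]mulrC -mulrA.
Qed.

Lemma tt_neq0 m : tt m != 0.
Proof.
elim: m => [|m IH]; first by rewrite /= div1r invr_eq0 dR.
by rewrite ttS !mulf_neq0 ?bR ?dR.
Qed.

Arguments tt : simpl never.

Lemma inv k : let '(s1, s2, s3) := sTriple a b c d k in
  let P := bifProd a b c d k.+1 in
  [/\ P o0 o0 = s1 / tt k.+2, P o0 o1 = s2 / tt k.+1 & P o0 o2 = s3 / tt k].
Proof.
elim: k => [|k IH].
  have [Q0 Q1 Q2] := P0; have [R0 R1 R2] := PS 0.
  rewrite [tt 2]ttS [tt 1]ttS /tt /= R0 R1 R2 Q0 Q1 Q2 /alpha /beta !rmorphD !rmorphM /=.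
  have := bR 0; have := bR 1; have := dR 0; have := dR 1.
  move=> ? ? ? ?; split; field; by rewrite ?andbT; repeat (apply/andP; split).
move: IH => /=.
case: (sTriple a b c d k) => [[s1 s2] s3] [I0 I1 I2].
have [R0 R1 R2] := PS k.+1.
rewrite /= R0 R1 R2 I0 I1 I2.
have := tt_neq0 k.
rewrite [tt k.+3]ttS [tt k.+2]ttS [tt k.+1]ttS /alpha /beta !rmorphM /=.
have := bR k; have := bR k.+1; have := bR k.+2; have := dR k; have := dR k.+1; have := dR k.+2.
move=> ? ? ? ? ? ? ?.
by split; field; rewrite ?andbT; repeat (apply/andP; split).
Qed.
End S.

Theorem mainTheorem2 (a b c d : nat -> int)
  (hb : forall i : nat, b i != 0) (hd : forall i : nat, d i != 0) (n : nat) :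
  An a b c d n = s_seq a b c d n / t_seq b d n.
Proof.
have E : ord0 = Ordinal (isT : (0 < 3)%N) by apply: val_inj.
rewrite /An E.
case: n => [|k].
  have [Q0 _ _] := P0 a b c d.
  by rewrite Q0 /alpha /=.
have := inv a b c d hb hd k.
rewrite /s_seq.
case: (sTriple a b c d k) => [[s1 s2] s3] [-> _ _].
by [].
Qed.
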